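(* Let $d\ge2$ be an integer, $D_1,\dots,D_d$ real constants, $D=\sum_iD_i$, and let $m:[-D^2/d,\pi^2/d)\to[0,\infty)$ be defined by (with $\mu=-\lambda$ for $\lambda<0$) $$m(\lambda)=\begin{cases}0 & \text{if } \lambda=-D^2/d<0,\\[2pt] \left|\ln\left(\dfrac{\big(\frac{e^{\sqrt{d\mu}}}{\sqrt{-C_-}}+1\big)\big(-\frac{1}{\sqrt{-C_-}}+1\big)}{\big(1-\frac{e^{\sqrt{d\mu}}}{\sqrt{-C_-}}\big)\big(1+\frac{1}{\sqrt{-C_-}}\big)}\right)\right| & \text{if } -D^2/d<\lambda<0,\\[2pt] |D| & \text{if } \lambda=0,\\[2pt] \left|\ln\dfrac{\tan(C_++\sqrt{d\lambda})+\sec(C_++\sqrt{d\lambda})}{\tan(C_+)+\sec(C_+)}\right| & \text{if } 0<\lambda<\pi^2/d,\end{cases}$$ where $C_-=\dfrac{e^{2\sqrt{d\mu}}-e^{D+\sqrt{d\mu}}}{e^{D+\sqrt{d\mu}}-1}$ and $C_+=\arctan\left(\dfrac{\cos(\sqrt{d\lambda})-e^D}{\sin(\sqrt{d\lambda})}\right)$. Then $m$ is surjective onto $[0,\infty)$.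
   Context: For $-D^2/d<\lambda<0$ one has $C_-<0$, so $\sqrt{-C_-}$ is defined. *)

(* Defs.v *)
From Stdlib Require Import Reals.
Open Scope R_scope.

Definition Dsum (d : nat) (Dv : nat -> R) : R := sum_f_R0 Dv (pred d).

Definition Cminus (d : nat) (D mu : R) : R :=
  (exp (2 * sqrt (INR d * mu)) - exp (D + sqrt (INR d * mu)))
  / (exp (D + sqrt (INR d * mu)) - 1).

Definition Cplus (d : nat) (D lam : R) : R :=
  atan ((cos (sqrt (INR d * lam)) - exp D) / sin (sqrt (INR d * lam))).

Definition sec (x : R) : R := 1 / cos x.

(* The function m on [-D^2/d, pi^2/d) (values outside the domain irrelevant). *)
Definition m_fun (d : nat) (D lam : R) : R :=
  if Rlt_dec lam 0 then
    if Req_EM_T lam (- D ^ 2 / INR d) then 0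
    else
      let mu := - lam in
      let s := sqrt (- Cminus d D mu) in
      let a := exp (sqrt (INR d * mu)) / s in
      let b := 1 / s in
      Rabs (ln (((a + 1) * (- b + 1)) / ((1 - a) * (1 + b))))
  else if Req_EM_T lam 0 then Rabs D
  else
    let c := Cplus d D lam in
    let t := sqrt (INR d * lam) in
    Rabs (ln ((tan (c + t) + sec (c + t)) / (tan c + sec c))).

(* Main.v *)
Require Import Defs.
From Stdlib Require Import Reals Lra Lia Psatz.
Open Scope R_scope.

Lemma div_eq a b c e : b <> 0 -> e <> 0 -> a * e = c * b -> a / b = c / e.
Proof. intros Hb He H. unfold Rdiv. apply (Rmult_eq_reg_r (b * e)); [|now apply Rmult_integral_contrapositive]. replace (a * / b * (b * e)) with (a * e) by (field; auto). replace (c * / e * (b * e)) with (c * b) by (field; auto). exact H. Qed.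

Lemma ratio_exp (E y : R) : 0 < E ->
  (1 + E + (1 + E) * ((exp y - 1) / (exp y + 1))) /
  (1 + E - (1 + E) * ((exp y - 1) / (exp y + 1))) = exp y.
Proof.
  intros HE. assert (Hy : 0 < exp y) by apply exp_pos.
  assert (H1 : 1 + E - (1 + E) * ((exp y - 1) / (exp y + 1)) = 2 * (1 + E) / (exp y + 1))
    by (field; lra).
  rewrite H1. field. lra.
Qed.

Lemma sqrt_d (d : nat) (v : R) : (2 <= d)%nat -> 0 <= v -> sqrt (INR d * (v * v / INR d)) = v.
Proof.
  intros Hd Hv. assert (0 < INR d) by (apply lt_0_INR; lia).
  replace (INR d * (v * v / INR d)) with (v * v) by (field; lra).
  apply sqrt_square; auto.
Qed.

Lemma key_pos (d : nat) (D y : R) : (2 <= d)%nat -> Rabs D < y ->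
  exists lam, - D ^ 2 / INR d <= lam < PI ^ 2 / INR d /\ m_fun d D lam = y.
Proof.
  intros Hd Hy.
  assert (Hdp : 0 < INR d) by (apply lt_0_INR; lia).
  set (E := exp D). assert (HE : 0 < E) by apply exp_pos.
  set (ey := exp y). assert (Hey : 0 < ey) by apply exp_pos.
  set (Q := (1 + E) * ((ey - 1) / (ey + 1))).
  assert (HQa : 1 - E < Q /\ E - 1 < Q).
  { destruct (Rle_or_lt 0 D) as [HD|HD].
    - rewrite Rabs_pos_eq in Hy by lra.
      assert (E < ey) by (apply exp_increasing; lra).
      assert (Hq : Q - (E - 1) = 2 * (ey - E) / (ey + 1)) by (unfold Q; field; lra).
      assert (0 < 2 * (ey - E) / (ey + 1)) by (apply Rdiv_lt_0_compat; lra).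
      assert (1 <= E).
      { unfold E. destruct HD as [HD|HD]. left. rewrite <- exp_0. apply exp_increasing; auto.
        rewrite <- HD, exp_0. lra. }
      lra.
    - rewrite Rabs_left in Hy by lra.
      assert (Hm : 1 < E * ey) by (unfold E, ey; rewrite <- exp_plus, <- exp_0; apply exp_increasing; lra).
      assert (E < 1) by (unfold E; rewrite <- exp_0; apply exp_increasing; lra).
      assert (Hq : Q - (1 - E) = 2 * (E * ey - 1) / (ey + 1)) by (unfold Q; field; lra).
      assert (0 < 2 * (E * ey - 1) / (ey + 1)) by (apply Rdiv_lt_0_compat; lra).
      lra. }
  assert (HQb : Q < 1 + E).
  { assert (Hq : 1 + E - Q = 2 * (1 + E) / (ey + 1)) by (unfold Q; field; lra).
    assert (0 < 2 * (1 + E) / (ey + 1)) by (apply Rdiv_lt_0_compat; lra). lra. }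
  assert (HQ0 : 0 < Q) by lra.
  set (c0 := (1 + E * E - Q * Q) / (2 * E)).
  assert (Hc0 : -1 < c0 < 1).
  { assert (h1 : 1 - c0 = (Q * Q - (1 - E) * (1 - E)) / (2 * E)) by (unfold c0; field; lra).
    assert (h2 : c0 + 1 = ((1 + E) * (1 + E) - Q * Q) / (2 * E)) by (unfold c0; field; lra).
    assert (0 < (Q * Q - (1 - E) * (1 - E)) / (2 * E)) by (apply Rdiv_lt_0_compat; nra).
    assert (0 < ((1 + E) * (1 + E) - Q * Q) / (2 * E)) by (apply Rdiv_lt_0_compat; nra).
    lra. }
  set (t := acos c0).
  assert (Ht : 0 < t < PI) by (apply acos_bound_lt; auto).
  assert (Hct : cos t = c0) by (apply cos_acos; lra).
  set (S := sin t).
  assert (HS : 0 < S) by (apply sin_gt_0; lra).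
  assert (HS2 : S * S = 1 - c0 * c0).
  { pose proof (sin2_cos2 t) as h. unfold Rsqr in h. rewrite Hct in h. unfold S. lra. }
  assert (H2Ec0 : 2 * E * c0 = 1 + E * E - Q * Q) by (unfold c0; field; lra).
  exists (t * t / INR d).
  split.
  { split.
    - assert (0 <= D ^ 2 / INR d) by (apply Rmult_le_pos; [apply pow2_ge_0|left; apply Rinv_0_lt_compat; lra]).
      assert (0 < t * t / INR d) by (apply Rdiv_lt_0_compat; nra).
      unfold Rdiv in *. lra.
    - unfold Rdiv. apply Rmult_lt_compat_r. apply Rinv_0_lt_compat; lra. nra. }
  unfold m_fun.
  destruct (Rlt_dec (t * t / INR d) 0) as [h|_].
  { assert (0 < t * t / INR d) by (apply Rdiv_lt_0_compat; nra). lra. }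
  destruct (Req_EM_T (t * t / INR d) 0) as [h|_].
  { assert (0 < t * t / INR d) by (apply Rdiv_lt_0_compat; nra). lra. }
  cbv zeta. unfold Cplus. rewrite sqrt_d by (auto; lra).
  fold E. rewrite Hct. fold S.
  set (T := (c0 - E) / S).
  assert (HW : sqrt (1 + T²) = Q / S).
  { replace (1 + T²) with ((Q / S) * (Q / S)).
    apply sqrt_square. apply Rlt_le, Rdiv_lt_0_compat; lra.
    unfold T, Rsqr. field_simplify_eq; [|lra]. nra. }
  set (c := atan T).
  assert (Hcc : cos c = S / Q) by (unfold c; rewrite cos_atan, HW; field; lra).
  assert (Hsc : sin c = (c0 - E) / Q) by (unfold c; rewrite sin_atan, HW; unfold T; field; lra).
  assert (Hcct : cos (c + t) = E * S / Q) by (rewrite cos_plus, Hcc, Hsc, Hct; fold S; field; lra).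
  assert (Hsct : sin (c + t) = (1 - E * c0) / Q)
    by (rewrite sin_plus, Hcc, Hsc, Hct; fold S; field_simplify_eq; [nra|lra]).
  unfold tan, sec. rewrite Hcct, Hsct, Hcc, Hsc.
  assert (Hpos : 0 < c0 - E + Q).
  { assert (Q * Q - (c0 - E) * (c0 - E) = S * S) by nra. nra. }
  assert (Hr : ((1 - E * c0) / Q / (E * S / Q) + 1 / (E * S / Q)) /
               ((c0 - E) / Q / (S / Q) + 1 / (S / Q)) = (1 - E * c0 + Q) / (E * (c0 - E + Q))).
  { field. repeat split; lra. }
  rewrite Hr.
  assert (Hr2 : (1 - E * c0 + Q) / (E * (c0 - E + Q)) = (1 + E + Q) / (1 + E - Q)).
  { apply div_eq. apply Rmult_integral_contrapositive; lra. lra.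
    unfold c0. field. lra. }
  rewrite Hr2. pose proof (ratio_exp E y HE) as hr. fold ey in hr. fold Q in hr. rewrite hr. unfold ey. rewrite ln_exp.
  apply Rabs_pos_eq. pose proof (Rabs_pos D). lra.
Qed.

Lemma key_neg (d : nat) (D y : R) : (2 <= d)%nat -> 0 < y -> y < Rabs D ->
  exists lam, - D ^ 2 / INR d <= lam < PI ^ 2 / INR d /\ m_fun d D lam = y.
Proof.
  intros Hd Hy0 Hy.
  assert (Hdp : 0 < INR d) by (apply lt_0_INR; lia).
  set (E := exp D). assert (HE : 0 < E) by apply exp_pos.
  set (ey := exp y). assert (Hey : 1 < ey) by (unfold ey; rewrite <- exp_0; apply exp_increasing; lra).
  set (P := (1 + E) * ((ey - 1) / (ey + 1))).
  assert (HP0 : 0 < P).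
  { unfold P. apply Rmult_lt_0_compat. lra. apply Rdiv_lt_0_compat; lra. }
  set (M := exp (Rabs D)).
  assert (HPa : (P < E - 1 /\ M = E) \/ (P < 1 - E /\ M = / E)).
  { destruct (Rle_or_lt 0 D) as [HD|HD].
    - left. rewrite Rabs_pos_eq in Hy by lra.
      assert (ey < E) by (apply exp_increasing; lra).
      assert (Hq : E - 1 - P = 2 * (E - ey) / (ey + 1)) by (unfold P; field; lra).
      assert (0 < 2 * (E - ey) / (ey + 1)) by (apply Rdiv_lt_0_compat; lra).
      split. lra. unfold M. rewrite Rabs_pos_eq by lra. reflexivity.
    - right. rewrite Rabs_left in Hy by lra.
      assert (Hm : E * ey < 1) by (unfold E, ey; rewrite <- exp_plus, <- exp_0; apply exp_increasing; lra).
      assert (Hq : 1 - E - P = 2 * (1 - E * ey) / (ey + 1)) by (unfold P; field; lra).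
      assert (0 < 2 * (1 - E * ey) / (ey + 1)) by (apply Rdiv_lt_0_compat; lra).
      split. lra. unfold M. rewrite Rabs_left by lra. rewrite exp_Ropp. reflexivity. }
  assert (HM1 : 1 < M).
  { unfold M. rewrite <- exp_0. apply exp_increasing. lra. }
  set (B := 1 + E * E - P * P).
  assert (HB : 2 * E < B) by (unfold B; destruct HPa as [[h _]|[h _]]; nra).
  set (R := sqrt (B * B - 4 * E * E)).
  assert (HR2 : R * R = B * B - 4 * E * E) by (unfold R; apply sqrt_sqrt; nra).
  assert (HR0 : 0 <= R) by apply sqrt_pos.
  set (x := (B + R) / (2 * E)).
  assert (Hx1 : 1 < x).
  { unfold x. apply (Rmult_lt_reg_r (2 * E)). lra. field_simplify; lra. }
  assert (Hxeq : E * x * x - B * x + E = 0).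
  { unfold x. field_simplify_eq; [|lra]. nra. }
  set (x1 := (B - R) / (2 * E)).
  assert (Hx1' : x1 < 1).
  { assert (B - 2 * E < R) by nra.
    unfold x1. apply (Rmult_lt_reg_r (2 * E)). lra. field_simplify; lra. }
  assert (HfM : 0 < E * M * M - B * M + E).
  { destruct HPa as [[_ h]|[_ h]]; rewrite h.
    - replace (E * E * E - B * E + E) with (E * (P * P)) by (unfold B; ring). nra.
    - replace (E * / E * / E - B * / E + E) with ((P * P) / E) by (unfold B; field; lra).
      apply Rdiv_lt_0_compat; nra. }
  assert (Hfact : E * M * M - B * M + E = E * (M - x1) * (M - x)).
  { unfold x1, x. field_simplify_eq; [|lra]. nra. }
  assert (HxM : x < M).
  { rewrite Hfact in HfM. assert (0 < E * (M - x1)) by nra. nra. }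
  set (s := ln x).
  assert (Hs : 0 < s < Rabs D).
  { split. unfold s. rewrite <- ln_1. apply ln_increasing; lra.
    replace (Rabs D) with (ln M) by (unfold M; apply ln_exp).
    apply ln_increasing; lra. }
  assert (Hexs : exp s = x) by (unfold s; apply exp_ln; lra).
  assert (HsD : s * s < D ^ 2).
  { replace (D ^ 2) with (Rabs D * Rabs D). nra.
    rewrite <- Rabs_mult. rewrite Rabs_pos_eq. ring. nra. }
  exists (- (s * s / INR d)).
  assert (Hlam0 : 0 < s * s / INR d) by (apply Rdiv_lt_0_compat; nra).
  assert (Hlt : s * s / INR d < D ^ 2 / INR d).
  { unfold Rdiv. apply Rmult_lt_compat_r. apply Rinv_0_lt_compat; lra. auto. }
  split.
  { split.
    - unfold Rdiv in *. lra.
    - assert (0 <= PI ^ 2 / INR d) by (apply Rmult_le_pos; [apply pow2_ge_0|left; apply Rinv_0_lt_compat; lra]).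
      lra. }
  unfold m_fun.
  destruct (Rlt_dec (- (s * s / INR d)) 0) as [_|h]; [|lra].
  destruct (Req_EM_T (- (s * s / INR d)) (- D ^ 2 / INR d)) as [h|_].
  { unfold Rdiv in h, Hlt. lra. }
  cbv zeta. rewrite Ropp_involutive. unfold Cminus. rewrite sqrt_d by (auto; lra).
  replace (2 * s) with (s + s) by ring. rewrite !exp_plus, Hexs. fold E.
  set (u := E * x - 1).
  set (K2 := x * (E - x) / u).
  assert (HK2 : 0 < K2).
  { unfold K2, u. destruct HPa as [[h' h]|[h' h]]; rewrite h in HxM.
    - apply Rdiv_lt_0_compat; nra.
    - assert (E < 1) by nra.
      assert (E * x < 1).
      { replace 1 with (E * / E) by (field; lra). apply Rmult_lt_compat_l; lra. }
      replace (x * (E - x) / (E * x - 1)) with ((x * (x - E)) / (1 - E * x)) by (field; lra).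
      apply Rdiv_lt_0_compat; nra. }
  assert (Hu : u <> 0).
  { intro h. unfold K2 in HK2. rewrite h in HK2. unfold Rdiv in HK2. rewrite Rinv_0 in HK2. lra. }
  replace (- ((x * x - E * x) / u)) with K2 by (unfold K2, u; field; auto).
  set (k := sqrt K2).
  assert (Hk0 : 0 < k) by (apply sqrt_lt_R0; auto).
  assert (Hkk : k * k = K2) by (apply sqrt_sqrt; lra).
  assert (Hkx : k <> x).
  { intro h. assert (H : k * k - x * x = x * E * (1 - x * x) / u) by (rewrite Hkk; unfold K2, u; field; auto).
    rewrite h in H. assert (H0 : x * E * (1 - x * x) / u = 0) by lra.
    unfold Rdiv in H0. apply Rmult_integral in H0. destruct H0 as [H0|H0].
    nra. apply Rinv_neq_0_compat in Hu. auto. }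
  assert (Hr1 : (x / k + 1) * (- (1 / k) + 1) / ((1 - x / k) * (1 + 1 / k))
                = (x + k) * (k - 1) / ((k - x) * (k + 1))).
  { field. repeat split; try lra. all: try (intro h; apply Hkx; lra). }
  rewrite Hr1.
  set (P' := k * u / x).
  assert (HP'2 : P' * P' = P * P).
  { assert (Hrel : (E - x) * u = x * (P * P)) by (unfold u, B in *; nra).
    unfold P'. replace (k * u / x * (k * u / x)) with (k * k * u * u / (x * x)) by (field; lra).
    rewrite Hkk. unfold K2. transitivity ((E - x) * u / x). field. split; [lra|auto]. rewrite Hrel. field. lra. }
  assert (HPlt : P < 1 + E) by (destruct HPa as [[h _]|[h _]]; lra).
  assert (HP' : P' = P \/ P' = - P).
  { assert (H : (P' - P) * (P' + P) = 0) by nra. apply Rmult_integral in H. lra. }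
  assert (Hr2 : (x + k) * (k - 1) / ((k - x) * (k + 1)) = (1 + E - P') / (1 + E + P')).
  { apply div_eq.
    - apply Rmult_integral_contrapositive. split. intro h; apply Hkx; lra. lra.
    - lra.
    - assert (Hd2 : (x + k) * (k - 1) * (1 + E + P') - (1 + E - P') * ((k - x) * (k + 1))
                  = 2 * k * (k * k * u - x * (E - x)) / x) by (unfold P', u; field; lra).
      assert (H : k * k * u - x * (E - x) = 0) by (rewrite Hkk; unfold K2; field; auto).
      rewrite H in Hd2. lra. }
  rewrite Hr2.
  pose proof (ratio_exp E y HE) as hr. fold ey P in hr.
  destruct HP' as [h|h]; rewrite h.
  - replace ((1 + E - P) / (1 + E + P)) with (/ ((1 + E + P) / (1 + E - P))) by (field; lra).
    rewrite hr. unfold ey. rewrite ln_Rinv by apply exp_pos. rewrite ln_exp.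
    rewrite Rabs_Ropp. apply Rabs_pos_eq; lra.
  - replace (1 + E - - P) with (1 + E + P) by ring.
    replace (1 + E + - P) with (1 + E - P) by ring.
    rewrite hr. unfold ey. rewrite ln_exp. apply Rabs_pos_eq; lra.
Qed.

Theorem lemma3p5 (d : nat) (Dv : nat -> R) :
  (2 <= d)%nat ->
  forall y : R, 0 <= y ->
  exists lam : R,
    - (Dsum d Dv) ^ 2 / INR d <= lam < PI ^ 2 / INR d /\
    m_fun d (Dsum d Dv) lam = y.
Proof.
  intros Hd y Hy.
  assert (Hdp : 0 < INR d) by (apply lt_0_INR; lia).
  set (D := Dsum d Dv).
  assert (HPI : 0 < PI ^ 2 / INR d) by (apply Rdiv_lt_0_compat; [apply pow_lt, PI_RGT_0|lra]).
  assert (HD2 : 0 <= D ^ 2 / INR d) by (apply Rmult_le_pos; [apply pow2_ge_0|left; apply Rinv_0_lt_compat; lra]).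
  destruct (Rtotal_order y (Rabs D)) as [Hlt|[Heq|Hgt]].
  - destruct (Req_dec y 0) as [H0|H0].
    + subst y. exists (- D ^ 2 / INR d).
      assert (HDn : D <> 0) by (intro h; rewrite h, Rabs_R0 in Hlt; lra).
      assert (HDp : 0 < D ^ 2 / INR d) by (apply Rdiv_lt_0_compat; [destruct (Rdichotomy _ _ HDn); simpl; nra|lra]).
      split. split. lra. unfold Rdiv in *. lra.
      unfold m_fun. destruct (Rlt_dec (- D ^ 2 / INR d) 0) as [_|h].
      * destruct (Req_EM_T (- D ^ 2 / INR d) (- D ^ 2 / INR d)) as [_|h]; [reflexivity|easy].
      * exfalso. apply h. unfold Rdiv in *. lra.
    + apply key_neg; auto. lra.
  - exists 0. split. split. unfold Rdiv in *. lra. auto.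
    unfold m_fun. destruct (Rlt_dec 0 0) as [h|_]; [lra|].
    destruct (Req_EM_T 0 0) as [_|h]; [auto|easy].
  - apply key_pos; auto.
Qed.
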